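(* Insert $2^k$ values one at a time into an initially empty black-white array (BWA). The chronological order in which the nodes of the BWA merge tree are realized is exactly the post-order traversal of that tree. Here a leaf is realized when its value is inserted, and an internal node is realized when the merge it represents is performed.
   Context: A black-white array (BWA) of size $N=2^K$ stores values from a totally ordered set. It has a white array $W[1..N-1]$ and a black array $B[1..N/2-1]$. For $i\ge0$, the segment of rank $i$ of either array is the index block $[2^i,2^{i+1}-1]$. A state variable $\mathtt{total}$ counts stored values and is initially $0$. The rank-$i$ segment is active iff bit $i$ of $\mathtt{total}$ is $1$. Insert$(v)$: if rank 0 is inactive, set $W[1]=v$; otherwise set $B[1]=v$ and perform $\mathrm{merge}(0)$. $\mathrm{merge}(i)$: merge the sorted white and black segments of rank $i$. The result goes into the white rank-$(i+1)$ segment if that segment is inactive. Otherwise it goes into the black rank-$(i+1)$ segment, followed by $\mathrm{merge}(i+1)$. When an insertion completes, $\mathtt{total}$ has increased by one. The BWA merge tree for $2^k$ insertions is the complete binary tree with $2^k$ leaves. Its leaves are the inserted values, from left to right in insertion order, and represent rank-0 segments. Each internal node at height $j$ represents the rank-$j$ segment produced by merging the two segments represented by its children. Post-order traversal visits the left subtree, then the right subtree, then the node. *)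

(* Defs.v *)
From mathcomp Require Import all_boot all_order.
Set Implicit Arguments. Unset Strict Implicit. Unset Printing Implicit Defensive.
Import Order.TTheory.
Local Open Scope order_scope.

(* Binary trees whose leaves are labelled by insertion indices (0-based). *)
Inductive btree := BLeaf of nat | BNode of btree & btree.

Fixpoint postorder (t : btree) : seq btree :=
  match t with
  | BLeaf _ => [:: t]
  | BNode l r => postorder l ++ postorder r ++ [:: t]
  end.

(* The complete binary tree of height j whose leaves are, from left to
   right, the insertion indices a*2^j, ..., a*2^j + 2^j - 1. *)
Fixpoint ctree (j a : nat) : btree :=
  match j with
  | 0 => BLeaf a
  | j'.+1 => BNode (ctree j' a.*2) (ctree j' a.*2.+1)
  end.

Definition bwa_merge_tree (k : nat) : btree := ctree k 0.

Definition nbit (i n : nat) : bool := odd (n %/ 2 ^ i).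

Section BWA.
Context {d : Order.disp_t} {T : orderType d}.

(* A segment: its (sorted) content, together with the merge-tree node it
   represents (its provenance). *)
Definition segment := (seq T * btree)%type.

Definition upd (f : nat -> segment) (i : nat) (x : segment) : nat -> segment :=
  fun j => if j == i then x else f j.

Record bwa := BWA {
  total : nat;
  white : nat -> segment;
  black : nat -> segment;
  log   : seq btree         (* tree nodes realized so far, chronologically *)
}.

Definition empty_seg : segment := ([::], BLeaf 0).

Definition bwa_empty : bwa := BWA 0 (fun _ => empty_seg) (fun _ => empty_seg) [::].

Definition active (s : bwa) (i : nat) : bool := nbit i (total s).

(* merge(i), performed on a state whose total has not yet been incremented.
   The merged segment represents the node whose children are the nodes of
   the white (left) and black (right) rank-i segments; performing the merge
   realizes that node, which is appended to the log.  [fuel] only ensures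
   termination (it never runs out when fuel >= total s). *)
Fixpoint bwa_merge (fuel : nat) (i : nat) (s : bwa) : bwa :=
  let m : segment := (merge <=%O (white s i).1 (black s i).1,
                      BNode (white s i).2 (black s i).2) in
  let lg := rcons (log s) m.2 in
  if ~~ active s i.+1 then BWA (total s) (upd (white s) i.+1 m) (black s) lg
  else match fuel with
       | 0 => BWA (total s) (white s) (black s) lg
       | f.+1 => bwa_merge f i.+1 (BWA (total s) (white s) (upd (black s) i.+1 m) lg)
       end.

(* Insert(v): the leaf realized is the one labelled by the insertion index
   (= current total).  total is incremented once the insertion completes. *)
Definition bwa_insert (v : T) (s : bwa) : bwa :=
  let t := total s in
  let leaf : segment := ([:: v], BLeaf t) in
  let lg := rcons (log s) (BLeaf t) in
  let s' := if ~~ active s 0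
            then BWA t (upd (white s) 0 leaf) (black s) lg
            else bwa_merge t 0 (BWA t (white s) (upd (black s) 0 leaf) lg) in
  BWA t.+1 (white s') (black s') (log s').

Definition bwa_insert_all (vs : seq T) (s : bwa) : bwa :=
  foldl (fun s v => bwa_insert v s) s vs.

End BWA.

(* Main.v *)
Require Import Defs.
From mathcomp Require Import all_boot all_order.
From mathcomp Require Import zify.

Lemma div_last (n p e : nat) : n.+1 = p.+1 * 2 ^ e -> n %/ 2 ^ e = p.
Proof.
move=> H; have D0 : 0 < 2 ^ e by rewrite expn_gt0.
have -> : n = p * 2 ^ e + (2 ^ e).-1 by move: H D0; set D := 2 ^ e; nia.
by rewrite divnMDl // divn_small ?addn0 //; move: D0; set D := 2 ^ e; lia.
Qed.

Lemma nbit_low (q a j : nat) : j < a -> nbit j (q * 2 ^ a) = false.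
Proof.
move=> ja; rewrite /nbit -(subnK (ltnW ja)) expnD mulnA mulnK ?expn_gt0 //.
by rewrite oddM oddX subn_eq0 leqNgt ja /= andbF.
Qed.

Lemma div_even (p m : nat) : ~~ odd p -> 0 < m -> p %/ 2 ^ m = p.+1 %/ 2 ^ m.
Proof.
move=> ev; case: m => // m _.
rewrite expnS !divnMA.
have -> : p.+1 %/ 2 = p %/ 2 by move: ev; rewrite -dvdn2; lia.
done.
Qed.

Lemma ndvd_odd (q a j : nat) : odd q -> a < j -> ~~ (2 ^ j %| q * 2 ^ a).
Proof.
move=> oq aj; rewrite -(subnK (ltnW aj)) expnD dvdn_pmul2r ?expn_gt0 //.
apply/negP => H; have : 2 %| q.
  by apply: dvdn_trans H; rewrite -{1}(expn1 2) dvdn_exp2l // subn_gt0.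
by rewrite dvdn2 oq.
Qed.

Definition nd j n := ctree j ((n %/ 2 ^ j).-1).
Definition stepk k m := [seq nd j m.+1 | j <- iota 0 k.+1 & 2 ^ j %| m.+1].

Lemma stepkS k m : stepk k.+1 m =
  stepk k m ++ (if 2 ^ k.+1 %| m.+1 then [:: nd k.+1 m.+1] else [::]).
Proof.
rewrite /stepk -[k.+2]addn1 iotaD filter_cat map_cat /= add0n.
by case: (2 ^ k.+1 %| m.+1).
Qed.

Lemma postS k a : postorder (ctree k.+1 a) =
  postorder (ctree k a.*2) ++ postorder (ctree k a.*2.+1) ++ [:: ctree k.+1 a].
Proof. by []. Qed.

Lemma comb k a : flatten [seq stepk k m | m <- iota (a * 2 ^ k) (2 ^ k)] = postorder (ctree k a).
Proof.
elim: k a => [|k IH] a.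
  by rewrite /stepk /= expn0 dvd1n /= muln1 /nd expn0 divn1.
set N := 2 ^ k.+1.
have N0 : 0 < N by rewrite expn_gt0.
rewrite {2}(_ : N = N.-1 + 1); last by lia.
rewrite iotaD map_cat flatten_cat /= cats0.
rewrite (_ : map (stepk k.+1) (iota (a * N) N.-1) = map (stepk k) (iota (a * N) N.-1)); last first.
  apply/eq_in_map => m; rewrite mem_iota => /andP [h1 h2]; rewrite stepkS.
  case: ifP => [H|_]; last by rewrite cats0.
  have : N %| m.+1 - a * N by rewrite dvdn_sub // dvdn_mull.
  by move=> /dvdn_leq; rewrite subn_gt0 ltnS h1 => /(_ isT); move: h2; lia.
rewrite stepkS.
have -> : (a * N + N.-1).+1 = a.+1 * N by rewrite mulSn; lia.
rewrite dvdn_mull // /nd mulnK // /= -/(nd).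
rewrite !catA; congr (_ ++ _).
have <- : flatten [seq stepk k i | i <- iota (a * N) N] =
   flatten [seq stepk k i | i <- iota (a * N) N.-1] ++ stepk k (a * N + N.-1).
  by rewrite {2}(_ : N = N.-1 + 1) ?iotaD ?map_cat ?flatten_cat /= ?cats0 //; lia.
have K0 : 0 < 2 ^ k by rewrite expn_gt0.
have -> : N = 2 ^ k + 2 ^ k by rewrite /N expnS; lia.
rewrite iotaD map_cat flatten_cat -!IH; congr (_ ++ _); congr (flatten (map _ (iota _ _))); lia.
Qed.

Lemma head_list {k i n p} : i < k -> n.+1 = p.+1 * 2 ^ i.+1 ->
  [seq nd j n.+1 | j <- iota i.+1 (k - i) & 2 ^ j %| n.+1] =
   ctree i.+1 p :: [seq nd j n.+1 | j <- iota i.+2 (k - i.+1) & 2 ^ j %| n.+1].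
Proof.
move=> ik Hn; rewrite (_ : k - i = (k - i.+1).+1) /=; last lia.
rewrite (_ : 2 ^ i.+1 %| n.+1 = true); last by rewrite Hn dvdn_mull.
by rewrite /= {1}/nd Hn mulnK ?expn_gt0.
Qed.

Section S.
Context {d : Order.disp_t} {T : orderType d}.

Lemma merge_ok k fuel : forall i (s : @bwa d T) n p, Defs.total s = n -> fuel + i = n ->
  n.+1 = p.+1 * 2 ^ i.+1 -> n.+1 <= 2 ^ k ->
  (white s i).2 = ctree i p.*2 -> (black s i).2 = ctree i p.*2.+1 ->
  (forall j, i < j -> nbit j n -> (white s j).2 = nd j n) ->
  [/\ Defs.total (bwa_merge fuel i s) = n,
      (forall j, nbit j n.+1 -> (white (bwa_merge fuel i s) j).2 = nd j n.+1) &
      log (bwa_merge fuel i s) = log s ++ [seq nd j n.+1 | j <- iota i.+1 (k - i) & 2 ^ j %| n.+1]].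
Proof.
elim: fuel => [|f IH] i s n p Ht Hf Hn Hk Hw Hb HA.
all: have Hp : n %/ 2 ^ i.+1 = p by apply: div_last; exact: Hn.
all: have ik : i < k by (rewrite -(@leq_exp2l 2) //; apply: (leq_trans _ Hk); rewrite Hn leq_pmull).
all: rewrite (head_list ik Hn) /= /active Ht Hw Hb (_ : nbit i.+1 n = odd p); last by rewrite /nbit Hp.
all: case: (boolP (odd p)) => Op /=.
2,4: split => //; [move=> j Hj; rewrite /upd; case: eqP => [->|/eqP ne] /=;
      [by rewrite /nd Hn mulnK ?expn_gt0 |] |
     rewrite -cats1; congr (_ ++ _); congr (_ :: _);
     rewrite (eq_in_filter (a2 := pred0)) ?filter_pred0 // => j;
     rewrite mem_iota => /andP [h _]; rewrite Hn; apply/negbTE/ndvd_odd => //=;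
     by rewrite Op].
2,3: case: (ltngtP j i.+1) ne Hj => // hj _ Hj.
2,4: by move: Hj; rewrite Hn nbit_low.
2,3: have E : n %/ 2 ^ j = n.+1 %/ 2 ^ j; first by
     rewrite -(subnK (ltnW hj)) expnD [2 ^ (_ - _) * _]mulnC !divnMA Hp Hn mulnK ?expn_gt0 // div_even // subn_gt0.
2,3: by rewrite /nd -E; apply: HA => //; [apply: ltnW | rewrite /nbit E].
- exfalso; have := ltn_expl i.+1 (isT : 1 < 2).
  have : 2 * 2 ^ i.+1 <= n.+1 by rewrite Hn leq_mul2r ltnS lt0n; apply/orP; right; apply/negP => /eqP p0; move: Op; rewrite p0.
  move: Hf Hn; move: (2 ^ i.+1) => X; lia.
- have Ep : p = (p./2).*2.+1 by rewrite -[p in LHS]odd_double_half Op.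
  set S := BWA _ _ _ _.
  have Hf' : f + i.+1 = n by lia.
  have Hn' : n.+1 = (p./2).+1 * 2 ^ i.+2 by rewrite Hn {1}Ep [2 ^ i.+2]expnS mulnA; congr (_ * _); lia.
  have Hw' : (white S i.+1).2 = ctree i.+1 (p./2).*2.
    rewrite /S /= HA //; last by rewrite /nbit Hp.
    rewrite /nd Hp.
    by congr ctree; rewrite {1}Ep.
  have Hb' : (black S i.+1).2 = ctree i.+1 (p./2).*2.+1.
    by rewrite /S /= /upd eqxx /= -Ep.
  have HA' : forall j, i.+1 < j -> nbit j n -> (white S j).2 = nd j n.
    by move=> j ij; apply: HA; apply: ltnW.
  case: (IH i.+1 S n p./2 erefl Hf' Hn' Hk Hw' Hb' HA') => H1 H2 H3.
  split => //.
  by rewrite H3 /S /= -cats1 -catA.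
Qed.
End S.

Section S.
Context {d : Order.disp_t} {T : orderType d}.

Definition Inv k n (s : @bwa d T) := [/\ Defs.total s = n,
  forall j, nbit j n -> (white s j).2 = nd j n &
  log s = flatten [seq stepk k m | m <- iota 0 n]].

Lemma stepk0 k n : stepk k n = BLeaf n :: [seq nd j n.+1 | j <- iota 1 k & 2 ^ j %| n.+1].
Proof. by rewrite /stepk /= expn0 dvd1n /= {1}/nd expn0 divn1. Qed.

Lemma insert_ok k (v : T) s n : n < 2 ^ k -> Inv k n s -> Inv k n.+1 (bwa_insert v s).
Proof.
move=> nk [Ht HA Hl].
have HL : flatten [seq stepk k m | m <- iota 0 n.+1] = log s ++ stepk k n.
  by rewrite -addn1 iotaD map_cat flatten_cat /= cats0 Hl.
rewrite /bwa_insert /active Ht /Inv HL stepk0.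
case: (boolP (nbit 0 n)) => Ob /=.
- have On : odd n by move: Ob; rewrite /nbit expn0 divn1.
  have Ep : n = (n./2).*2.+1 by rewrite -[n in LHS]odd_double_half On.
  set S := BWA _ _ _ _.
  have Hn' : n.+1 = (n./2).+1 * 2 ^ 1 by rewrite {1}Ep expn1; lia.
  have Hw' : (white S 0).2 = ctree 0 (n./2).*2.
    by rewrite /S /= HA // /nd expn0 divn1 {1}Ep.
  have Hb' : (black S 0).2 = ctree 0 (n./2).*2.+1.
    by rewrite /S /upd /= -Ep.
  have HA' : forall j, 0 < j -> nbit j n -> (white S j).2 = nd j n.
    by move=> j _; apply: HA.
  case: (merge_ok k n 0 S n (n./2) erefl (addn0 n) Hn' nk Hw' Hb' HA') => H1 H2 H3.
  by split => //; rewrite H3 /S /= subn0 -cats1 -catA.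
- have ev : ~~ odd n by move: Ob; rewrite /nbit expn0 divn1.
  split => //.
  + move=> j; rewrite /upd; case: eqP => [->|/eqP ne] Hj /=.
      by rewrite /nd expn0 divn1.
    have E : n %/ 2 ^ j = n.+1 %/ 2 ^ j by rewrite div_even // lt0n.
    by rewrite /nd -E HA //; move: Hj; rewrite /nbit E.
  + rewrite (eq_in_filter (a2 := pred0)) ?filter_pred0 ?cats1 // => j.
    rewrite mem_iota => /andP [h _].
    by have := ndvd_odd n.+1 0 j; rewrite expn0 muln1 /= ev => /(_ isT h) /negbTE.
Qed.

Lemma all_ok k (vs : seq T) : size vs <= 2 ^ k -> Inv k (size vs) (bwa_insert_all vs bwa_empty).
Proof.
elim/last_ind: vs => [|vs v IH].
  by move=> _; split => // j; rewrite /nbit div0n.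
rewrite size_rcons => H; rewrite /bwa_insert_all foldl_rcons.
by apply: insert_ok => //; apply: IH; apply: ltnW.
Qed.

End S.

Theorem mainTheorem5 (d : Order.disp_t) (T : orderType d) (k : nat) (vs : seq T) :
  size vs = 2 ^ k ->
  log (bwa_insert_all vs bwa_empty) = postorder (bwa_merge_tree k).
Proof.
move=> H; have [_ _ ->] := all_ok k vs (eq_leq H).
by rewrite H /bwa_merge_tree -(comb k 0) mul0n.
Qed.
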